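(* Let $n\geq7$ and let $u,v\in G(J(P_{n-5}))$. If $uv\in G(J(P_{n-5})^2)$, then $(x_{n-1}x_{n-2}x_{n-4}u)(x_nx_{n-2}x_{n-4}v)\in G(J(P_n)^2)$.
   Context: For $m\geq1$, $P_m$ is the path graph on vertices $x_1,\ldots,x_m$ with edges $\{x_i,x_{i+1}\}$; $J(P_m)$ is its cover ideal in a polynomial ring over a field, generated by the monomials $\prod_{x\in C}x$ with $C$ a minimal vertex cover of $P_m$; $G(I)$ denotes the set of minimal monomial generators of a monomial ideal $I$. *)

(* Defs.v *)
From mathcomp Require Import all_boot.
Set Implicit Arguments. Unset Strict Implicit. Unset Printing Implicit Defensive.

(* A monomial x_1^{a_1} x_2^{a_2} ... is represented by its exponent vector
   a : nat -> nat (the exponent of x_i is a i; only finitely many nonzero in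
   practice).  Monomials are compared pointwise. *)
Definition mono := nat -> nat.

Definition meq (a b : mono) : Prop := forall i, a i = b i.
Definition mdvd (a b : mono) : Prop := forall i, a i <= b i.
Definition mmul (a b : mono) : mono := fun i => a i + b i.
Definition var (i : nat) : mono := fun j => nat_of_bool (j == i).

(* The path graph P_m on vertices x_1..x_m with edges {x_i, x_{i+1}}. *)
Definition is_vcover (m : nat) (C : nat -> bool) : Prop :=
  (forall i, C i -> 1 <= i <= m) /\
  (forall i, 1 <= i -> i < m -> C i || C i.+1).

Definition is_min_vcover (m : nat) (C : nat -> bool) : Prop :=
  is_vcover m C /\
  forall D : nat -> bool, is_vcover m D -> (forall i, D i -> C i) ->
    forall i, C i -> D i.

Definition Jgens (m : nat) (u : mono) : Prop :=
  exists C, is_min_vcover m C /\ forall i, u i = nat_of_bool (C i).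

Definition J2gens (m : nat) (w : mono) : Prop :=
  exists u v, Jgens m u /\ Jgens m v /\ meq w (mmul u v).

Definition monideal (S : mono -> Prop) (w : mono) : Prop :=
  exists s, S s /\ mdvd s w.

Definition mingen (I : mono -> Prop) (w : mono) : Prop :=
  I w /\ forall w', I w' -> mdvd w' w -> meq w' w.

Definition J (m : nat) := monideal (Jgens m).
Definition J2 (m : nat) := monideal (J2gens m).

(* Main.v *)
Require Import Defs.
From mathcomp Require Import all_boot.
From mathcomp Require Import zify.
From Stdlib Require Import Classical.

Definition cnt m (C : nat -> bool) := \sum_(i < m.+1) (C i : nat).

Lemma cnt_lt m (C D : nat -> bool) i : (forall j, D j -> C j) -> C i -> ~~ D i -> i <= m ->
  cnt m D < cnt m C.
Proof.
move=> HDC Ci Di him.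
have hi : i < m.+1 by lia.
rewrite /cnt [X in _ < X](bigD1 (Ordinal hi)) //= [X in X < _](bigD1 (Ordinal hi)) //= Ci (negbTE Di).
rewrite add0n add1n ltnS; apply: leq_sum => j _.
case E: (D j) => //; by rewrite (HDC _ E).
Qed.

Lemma exists_min_k m k : forall C, cnt m C <= k -> is_vcover m C ->
  exists C0, is_min_vcover m C0 /\ (forall i, C0 i -> C i).
Proof.
elim: k => [|k IH] C Hk Hc; (destruct (classic (is_min_vcover m C)) as [Hm|Hm];
  [by exists C|]);
(have [D [HD [HDC [i [HCi HDi]]]]] : exists D, is_vcover m D /\ (forall i, D i -> C i) /\ exists i, C i /\ ~~ D i
  by (apply: NNPP => Hn; apply: Hm; split => // D HD HDC i HCi;
      case E: (D i) => //; exfalso; apply: Hn; exists D; split => //; split => //;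
      exists i; by rewrite E));
have hi := proj1 Hc i HCi; have Hlt := @cnt_lt m C D i HDC HCi HDi (proj2 (andP hi)).
- lia.
- have [C0 [H0 H0D]] := IH D ltac:(lia) HD. exists C0; split => // j /H0D; exact: HDC.
Qed.

Lemma exists_min m C : is_vcover m C ->
  exists C0, is_min_vcover m C0 /\ (forall i, C0 i -> C i).
Proof. exact: (@exists_min_k m (cnt m C) C (leqnn _)). Qed.

Lemma restr_cover n k C : k <= n -> is_vcover n C -> is_vcover k (fun j => C j && (j <= k)).
Proof.
move=> hk [Hs He]; split.
- move=> j /andP [Cj hj]; have := Hs j Cj; lia.
- move=> j h1 h2; case/orP: (He j h1 ltac:(lia)) => h.
  + apply/orP; left; rewrite h /=; lia.
  + apply/orP; right; rewrite h /=; lia.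
Qed.

Lemma mingenJ m u : mingen (J m) u -> Jgens m u.
Proof.
move=> [[s [Hs Hdiv]] Hmin].
have E := Hmin s (ex_intro _ s (conj Hs (fun i => leqnn _))) Hdiv.
case: Hs => [C [HC Hu]]; exists C; split => // i; by rewrite -E.
Qed.

Lemma ext_min n C c : 7 <= n -> is_min_vcover (n-5) C -> (c = n-1 \/ c = n) ->
  is_min_vcover n (fun i => [|| C i, i == n-4, i == n-2 | i == c]).
Proof.
move=> hn HC hc.
have supp := proj1 (proj1 HC).
split; [split|].
- move=> i; case/or4P => [/supp|/eqP->|/eqP->|/eqP->]; lia.
- move=> i h1 h2.
  have : i < n-5 \/ i = n-5 \/ i = n-4 \/ i = n-3 \/ i = n-2 \/ i = n-1 by lia.
  case=> [h|[h|[h|[h|[h|h]]]]].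
  + case/orP: (proj2 (proj1 HC) i h1 h) => ->; by rewrite ?orbT.
  + apply/orP; right; apply/or4P; constructor 2; apply/eqP; lia.
  + apply/orP; left; apply/or4P; constructor 2; apply/eqP; lia.
  + apply/orP; right; apply/or4P; constructor 3; apply/eqP; lia.
  + apply/orP; left; apply/or4P; constructor 3; apply/eqP; lia.
  + case: hc => hc.
    * apply/orP; left; apply/or4P; constructor 4; apply/eqP; lia.
    * apply/orP; right; apply/or4P; constructor 4; apply/eqP; lia.
- move=> D HD HDC i Hi.
  have notin : forall j, n-5 < j -> j <> n-4 -> j <> n-2 -> j <> c -> ~~ D j.
  { move=> j h1 h2 h3 h4; apply/negP => Dj.
    case/or4P: (HDC j Dj) => [/supp|/eqP|/eqP|/eqP]; lia. }
  case/or4P: Hi => [Ci|/eqP->|/eqP->|/eqP->].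
  + have HDr := @restr_cover n (n-5) _ ltac:(lia) HD.
    have HDrC : forall j, D j && (j <= n-5) -> C j.
    { move=> j /andP [Dj hj]. case/or4P: (HDC j Dj) => [//|/eqP|/eqP|/eqP]; lia. }
    by case/andP: (proj2 HC _ HDr HDrC i Ci).
  + case/orP: (proj2 HD (n-4) ltac:(lia) ltac:(lia)) => // h.
    have := notin (n-4).+1; rewrite h; lia.
  + case/orP: (proj2 HD (n-3) ltac:(lia) ltac:(lia)) => h.
    * have := notin (n-3); rewrite h; lia.
    * have E : (n-3).+1 = n-2 by lia. by rewrite -E.
  + case/orP: (proj2 HD (n-1) ltac:(lia) ltac:(lia)) => h; case: hc => hc.
    * by rewrite hc.
    * have := notin (n-1); rewrite h; lia.
    * have := notin (n-1).+1; rewrite h; lia.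
    * have E : (n-1).+1 = n by lia. by rewrite hc -E.
Qed.

Theorem lemma3p14 (n : nat) (u v : mono) :
  7 <= n ->
  mingen (J (n - 5)) u -> mingen (J (n - 5)) v ->
  mingen (J2 (n - 5)) (mmul u v) ->
  mingen (J2 n)
    (mmul (mmul (mmul (mmul (var n.-1) (var (n - 2))) (var (n - 4))) u)
          (mmul (mmul (mmul (var n) (var (n - 2))) (var (n - 4))) v)).
Proof.
move=> hn Hu Hv Huv.
have [Cu [HCu Hu']] := @mingenJ _ _ Hu.
have [Cv [HCv Hv']] := @mingenJ _ _ Hv.
have suppu := proj1 (proj1 HCu).
have suppv := proj1 (proj1 HCv).
have -> : n.-1 = n - 1 by lia.
set w := mmul _ _.
set U' := fun i => [|| Cu i, i == n-4, i == n-2 | i == n-1].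
set V' := fun i => [|| Cv i, i == n-4, i == n-2 | i == n].
have HU : is_min_vcover n U' := @ext_min n Cu (n-1) hn HCu (or_introl erefl).
have HV : is_min_vcover n V' := @ext_min n Cv n hn HCv (or_intror erefl).
have Hw : forall i, w i = U' i + V' i.
{ move=> i; rewrite /w /mmul /var Hu' Hv' /U' /V'.
  case E1: (Cu i); [have := suppu i E1|]; case E2: (Cv i); [have := suppv i E2| |have := suppv i E2|];
  repeat case: eqP; simpl; lia. }
have Wlow : forall i, i <= n-5 -> w i = Cu i + Cv i.
{ move=> i hi; rewrite Hw /U' /V'.
  case E1: (Cu i); case E2: (Cv i); repeat case: eqP; simpl; lia. }
have Whigh : forall i, n-5 < i -> w i = (i == n-4).*2 + (i == n-2).*2 + (i == n-1) + (i == n).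
{ move=> i hi; rewrite Hw /U' /V'.
  case E1: (Cu i); [have := suppu i E1|]; case E2: (Cv i); [have := suppv i E2| |have := suppv i E2|];
  repeat case: eqP; simpl; lia. }
split.
- exists (mmul (fun i => U' i : nat) (fun i => V' i : nat)); split.
  + exists (fun i => U' i : nat), (fun i => V' i : nat); split; [by exists U'|split; [by exists V'|by []]].
  + move=> i; by rewrite Hw.
- move=> w' [s [[a [b [[Ca [HCa Ha]] [[Cb [HCb Hb]] Hs]]]] Hsw']] Hw'w.
  have Hle : forall i, Ca i + Cb i <= w i.
  { move=> i; have := Hs i; have := Hsw' i; have := Hw'w i; rewrite /mmul -Ha -Hb; lia. }
  have key : forall i, Ca i + Cb i = w i.
  { move=> i.
    have W3 : w (n-3) = 0 by rewrite Whigh; [repeat case: eqP; simpl; lia|lia].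
    have W4 : w (n-4) = 2 by rewrite Whigh; [repeat case: eqP; simpl; lia|lia].
    have W2 : w (n-2) = 2 by rewrite Whigh; [repeat case: eqP; simpl; lia|lia].
    have W1 : w (n-1) = 1 by rewrite Whigh; [repeat case: eqP; simpl; lia|lia].
    have W0 : w n = 1 by rewrite Whigh; [repeat case: eqP; simpl; lia|lia].
    have H3 := Hle (n-3). rewrite W3 in H3.
    have : i <= n-5 \/ i = n-4 \/ i = n-3 \/ i = n-2 \/ i = n-1 \/ i = n \/ n < i by lia.
    case=> [h|[h|[h|[h|[h|[h|h]]]]]].
    + have [A0 [HA0 HA0a]] := @exists_min (n-5) _ (@restr_cover n (n-5) _ ltac:(lia) (proj1 HCa)).
      have [B0 [HB0 HB0b]] := @exists_min (n-5) _ (@restr_cover n (n-5) _ ltac:(lia) (proj1 HCb)).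
      set w0 : mono := fun j => (Ca j && (j <= n-5)) + (Cb j && (j <= n-5)).
      have Hj : J2 (n-5) w0.
      { exists (mmul (fun j => A0 j : nat) (fun j => B0 j : nat)); split.
        - exists (fun j => A0 j : nat), (fun j => B0 j : nat); split; [by exists A0|split; [by exists B0|by []]].
        - move=> j; rewrite /mmul /w0.
          case E1: (A0 j); [rewrite (HA0a _ E1)|]; (case E2: (B0 j); [rewrite (HB0b _ E2)|]); simpl; lia. }
      have Hd : mdvd w0 (mmul u v).
      { move=> j; rewrite /w0 /mmul Hu' Hv'.
        case: (leqP j (n-5)) => hj.
        - have := Hle j; rewrite Wlow // !andbT; done.
        - rewrite !andbF; lia. }
      have := proj2 Huv w0 Hj Hd i; rewrite /w0 /mmul Hu' Hv' Wlow // h !andbT; done.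
    + rewrite h W4. have E := proj2 (proj1 HCa) (n-4) ltac:(lia) ltac:(lia).
      have F := proj2 (proj1 HCb) (n-4) ltac:(lia) ltac:(lia).
      have e : (n-4).+1 = n-3 by lia. rewrite e in E F.
      move: E F H3; case: (Ca (n-4)); case: (Cb (n-4)); case: (Ca (n-3)); case: (Cb (n-3)); simpl; lia.
    + rewrite h W3; lia.
    + rewrite h W2. have E := proj2 (proj1 HCa) (n-3) ltac:(lia) ltac:(lia).
      have F := proj2 (proj1 HCb) (n-3) ltac:(lia) ltac:(lia).
      have e : (n-3).+1 = n-2 by lia. rewrite e in E F.
      move: E F H3; case: (Ca (n-2)); case: (Cb (n-2)); case: (Ca (n-3)); case: (Cb (n-3)); simpl; lia.
    + have E := proj2 (proj1 HCa) (n-1) ltac:(lia) ltac:(lia).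
      have F := proj2 (proj1 HCb) (n-1) ltac:(lia) ltac:(lia).
      have e : (n-1).+1 = n by lia. rewrite e in E F.
      have := Hle (n-1); have := Hle n; rewrite h W1 W0.
      move: E F; case: (Ca (n-1)); case: (Cb (n-1)); case: (Ca n); case: (Cb n); simpl; lia.
    + have E := proj2 (proj1 HCa) (n-1) ltac:(lia) ltac:(lia).
      have F := proj2 (proj1 HCb) (n-1) ltac:(lia) ltac:(lia).
      have e : (n-1).+1 = n by lia. rewrite e in E F.
      have := Hle (n-1); have := Hle n; rewrite h W1 W0.
      move: E F; case: (Ca (n-1)); case: (Cb (n-1)); case: (Ca n); case: (Cb n); simpl; lia.
    + have := Hle i; rewrite Whigh; last lia.
      repeat case: eqP; simpl; lia. }
  move=> i; have := Hs i; have := Hsw' i; have := Hw'w i; have := key i.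
  rewrite /mmul -Ha -Hb; lia.
Qed.
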